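(* Let $(\bar u,\bar v;\mu)$ and $(\bar u',\bar v';\mu')$ be two stable outcomes of a non-degenerate RiFle assignment game. Suppose $p_i\stackrel{\mu}{\longleftrightarrow}q_j$, $u_i=u'_i$ (so $p_i$ is indifferent between the two outcomes) and $v_j>v'_j$ (so $q_j$ strictly prefers $\mu$). Then $q_j$ is rigid. Symmetrically, if $p_i\stackrel{\mu}{\longleftrightarrow}q_j$, $v_j=v'_j$ and $u_i>u'_i$, then $p_i$ is rigid. (That is, an agent indifferent between the two outcomes cannot be preferred by a flexible agent.)
   Context: A RiFle assignment game consists of two disjoint sets of agents $P=\{p_1,\dots,p_n\}$ and $Q=\{q_1,\dots,q_n\}$, a pair of nonnegative real numbers $(\beta_{ij},\gamma_{ij})$ for every pair $(p_i,q_j)\in P\times Q$ (write $\alpha_{ij}=\beta_{ij}+\gamma_{ij}$), and a designation of every agent as rigid or flexible. Let $\mathcal R$ be the set of pairs with at least one rigid agent and $\mathcal F$ the set of pairs with both agents flexible. An outcome $(\bar u,\bar v;\mu)$ consists of a matching $\mu$ between $P$ and $Q$ (write $p_i\stackrel{\mu}{\longleftrightarrow} q_j$) and payoff vectors $\bar u,\bar v\in\mathbb R^n$. It is feasible if: (1) $u_i\ge0$, $v_j\ge0$; (2) if a rigid $p_i$ is matched to $q_j$ then $u_i=\beta_{ij}$ and, if $q_j$ is flexible, $v_j\ge\gamma_{ij}$; symmetrically for a rigid $q_j$ matched to $p_i$: $v_j=\gamma_{ij}$ and, if $p_i$ is flexible, $u_i\ge\beta_{ij}$; (3) $\sum_iu_i+\sum_jv_j=\sum_{p_i\stackrel{\mu}{\longleftrightarrow}q_j}\alpha_{ij}$.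 It is stable if feasible and $u_i+v_j\ge\alpha_{ij}$ for $(p_i,q_j)\in\mathcal F$ and ($u_i\ge\beta_{ij}$ or $v_j\ge\gamma_{ij}$) for $(p_i,q_j)\in\mathcal R$. Reservation prices are modeled by rigid dummy agents; for the following definition an agent left unmatched by a matching is regarded as matched to a rigid dummy agent. Given a coalition $C\subseteq P\cup Q$ and a matching $\mu$, the total payoff to $C$ under $\mu$ is forced if every pair matched under $\mu$ with one agent in $C$ and the other outside $C$ contains a rigid agent; the forced payoff is then $\sum_{p_i\in C,\ p_i\stackrel{\mu}{\longleftrightarrow}q_j}\beta_{ij}+\sum_{q_j\in C,\ p_i\stackrel{\mu}{\longleftrightarrow}q_j}\gamma_{ij}$. The game is non-degenerate if for any two matchings $\mu,\mu'$: whenever $C$ is a minimal coalition such that the payoff to $C$ is forced under both $\mu$ and $\mu'$, and the two forced payoffs are equal, then $\mu$ and $\mu'$ coincide on $C$. *)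

(* Defs.v *)
From mathcomp Require Import all_boot all_order all_algebra.
From mathcomp Require Import reals.
Set Implicit Arguments. Unset Strict Implicit. Unset Printing Implicit Defensive.
Import Order.TTheory GRing.Theory Num.Theory.
Local Open Scope ring_scope.

Record rifle_game (R : realType) (n : nat) := RiFle {
  beta : 'I_n -> 'I_n -> R;
  gamma : 'I_n -> 'I_n -> R;
  rigidP : 'I_n -> bool;
  rigidQ : 'I_n -> bool;
  beta_ge0 : forall i j, 0 <= beta i j;
  gamma_ge0 : forall i j, 0 <= gamma i j
}.

Section Defs.
Variables (R : realType) (n : nat) (G : rifle_game R n).

Definition alpha (i j : 'I_n) : R := beta G i j + gamma G i j.

(* A (possibly partial) matching between P and Q, given as a relation:
   M i j means p_i <-> q_j. *)
Definition is_matching (M : rel 'I_n) : Prop :=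
  (forall i j j', M i j -> M i j' -> j = j') /\
  (forall i i' j, M i j -> M i' j -> i = i').

Definition feasible (u v : 'I_n -> R) (M : rel 'I_n) : Prop :=
  [/\ (forall i, 0 <= u i) /\ (forall j, 0 <= v j),
      (forall i j, M i j -> rigidP G i ->
         u i = beta G i j /\ (~~ rigidQ G j -> gamma G i j <= v j)),
      (forall i j, M i j -> rigidQ G j ->
         v j = gamma G i j /\ (~~ rigidP G i -> beta G i j <= u i)) &
      \sum_(i < n) u i + \sum_(j < n) v j =
        \sum_(i < n) \sum_(j < n | M i j) alpha i j].

Definition stable (u v : 'I_n -> R) (M : rel 'I_n) : Prop :=
  [/\ feasible u v M,
      (forall i j, ~~ rigidP G i -> ~~ rigidQ G j -> alpha i j <= u i + v j) &
      (forall i j, rigidP G i || rigidQ G j ->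
         beta G i j <= u i \/ gamma G i j <= v j)].

(* The payoff to C is forced under M if every M-pair with one agent in C and
   the other outside C contains a rigid agent (unmatched agents are matched to
   rigid dummies, so impose no condition). *)
Definition forced (M : rel 'I_n) (CP CQ : {set 'I_n}) : Prop :=
  (forall i j, M i j -> i \in CP -> j \notin CQ -> rigidP G i || rigidQ G j) /\
  (forall i j, M i j -> j \in CQ -> i \notin CP -> rigidP G i || rigidQ G j).

(* The forced payoff (unmatched agents, matched to dummies, contribute 0). *)
Definition forced_payoff (M : rel 'I_n) (CP CQ : {set 'I_n}) : R :=
  \sum_(i in CP) \sum_(j < n | M i j) beta G i j +
  \sum_(j in CQ) \sum_(i < n | M i j) gamma G i j.

Definition nonempty_coalition (CP CQ : {set 'I_n}) : bool :=
  (CP != set0) || (CQ != set0).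

Definition minimal_forced_both (M M' : rel 'I_n) (CP CQ : {set 'I_n}) : Prop :=
  [/\ nonempty_coalition CP CQ, forced M CP CQ, forced M' CP CQ &
      forall CP' CQ' : {set 'I_n}, CP' \subset CP -> CQ' \subset CQ ->
        nonempty_coalition CP' CQ' -> forced M CP' CQ' -> forced M' CP' CQ' ->
        CP' = CP /\ CQ' = CQ].

Definition coincide_on (M M' : rel 'I_n) (CP CQ : {set 'I_n}) : Prop :=
  (forall i j, i \in CP -> M i j = M' i j) /\
  (forall i j, j \in CQ -> M i j = M' i j).

Definition non_degenerate : Prop :=
  forall M M' : rel 'I_n, is_matching M -> is_matching M' ->
  forall CP CQ : {set 'I_n},
    minimal_forced_both M M' CP CQ ->
    forced_payoff M CP CQ = forced_payoff M' CP CQ ->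
    coincide_on M M' CP CQ.

End Defs.

(* Main.v *)
Require Import Defs.
From mathcomp Require Import all_boot all_order all_algebra.
From mathcomp Require Import reals.
From mathcomp Require Import lra.
Import Order.TTheory GRing.Theory Num.Theory.
Local Open Scope ring_scope.

Section Aux.
Variables (R : realType) (n : nat) (G : rifle_game R n)
  (u v : 'I_n -> R) (M : rel 'I_n).
Hypotheses (HM : is_matching M) (Hs : stable G u v M).

Lemma pair_ge i j : M i j -> alpha G i j <= u i + v j.
Proof.
move=> Mij; case: Hs => [[[u0 v0] hP hQ _] hF _]; rewrite /alpha.
case rP: (rigidP G i).
  have [-> h] := hP _ _ Mij rP.
  case rQ: (rigidQ G j).
    by have [-> _] := hQ _ _ Mij rQ.
  by rewrite lerD2l h // rQ.
case rQ: (rigidQ G j).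
  have [-> h] := hQ _ _ Mij rQ.
  by rewrite lerD2r h // rP.
by apply: hF; rewrite ?rP ?rQ.
Qed.

Lemma sum_oneP (F : 'I_n -> R) i k : M i k -> \sum_(j | M i j) F j = F k.
Proof.
move=> Mik; rewrite (bigD1 k) //= big1 ?addr0 // => j /andP[Mij].
by rewrite (proj1 HM _ _ _ Mij Mik) eqxx.
Qed.

Lemma sum_oneQ (F : 'I_n -> R) j k : M k j -> \sum_(i | M i j) F i = F k.
Proof.
move=> Mkj; rewrite (bigD1 k) //= big1 ?addr0 // => i /andP[Mij].
by rewrite (proj2 HM _ _ _ Mij Mkj) eqxx.
Qed.

Lemma key : (forall i j, M i j -> u i + v j = alpha G i j) /\
  (forall i, (forall j, ~~ M i j) -> u i = 0) /\
  (forall j, (forall i, ~~ M i j) -> v j = 0).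
Proof.
case: Hs => [[[u0 v0] _ _ Hsum] _ _].
pose a i := u i - \sum_(j | M i j) u i.
pose b j := v j - \sum_(i | M i j) v j.
pose c i := \sum_(j | M i j) (u i + v j - alpha G i j).
have a0 i : 0 <= a i.
  case: (pickP (M i)) => [k Mik|none]; rewrite /a.
    by rewrite (sum_oneP _ _ _ Mik) subrr.
  by rewrite big_pred0 // subr0.
have b0 j : 0 <= b j.
  case: (pickP (M^~ j)) => [k Mkj|none]; rewrite /b.
    by rewrite (sum_oneQ _ _ _ Mkj) subrr.
  by rewrite big_pred0 // subr0.
have c0 i : 0 <= c i.
  by apply: sumr_ge0 => j Mij; rewrite subr_ge0 pair_ge.
have Ex : \sum_i \sum_(j | M i j) v j = \sum_j \sum_(i | M i j) v j.
  under eq_bigr do rewrite big_mkcond.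
  rewrite exchange_big /=.
  by apply: eq_bigr => j _; rewrite [RHS]big_mkcond.
have E : \sum_i a i + \sum_j b j + \sum_i c i = 0.
  rewrite /a /b /c !sumrB.
  under [X in _ + X]eq_bigr do rewrite sumrB big_split /=.
  rewrite sumrB big_split /= -Ex; move: Hsum; lra.
have sa : 0 <= \sum_i a i by apply: sumr_ge0 => i _.
have sb : 0 <= \sum_i b i by apply: sumr_ge0 => i _.
have sc : 0 <= \sum_i c i by apply: sumr_ge0 => i _.
have A0 : \sum_i a i = 0.
  move: E sa sb sc; lra.
have B0 : \sum_i b i = 0.
  move: E sa sb sc; lra.
have C0 : \sum_i c i = 0.
  move: E sa sb sc; lra.
split; last split.
- move=> i j Mij.
  have ci : c i = 0 by apply: (psumr_eq0P (P := predT)) => // k _.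
  have h : u i + v j - alpha G i j = 0.
    by apply: (psumr_eq0P _ ci) => // j' Mij'; rewrite subr_ge0 pair_ge.
  by move: h; lra.
- move=> i none.
  have ai : a i = 0 by apply: (psumr_eq0P (P := predT)) => // k _.
  by move: ai; rewrite /a big_pred0 ?subr0 // => k; apply/negbTE.
- move=> j none.
  have bj : b j = 0 by apply: (psumr_eq0P (P := predT)) => // k _.
  by move: bj; rewrite /b big_pred0 ?subr0 // => k; apply/negbTE.
Qed.

End Aux.
Arguments key {R n G u v M}.
Arguments sum_oneP {R n M}.
Arguments sum_oneQ {R n M}.

Lemma minP (R : realType) (n : nat) (G : rifle_game R n) (M M' : rel 'I_n) i :
  rigidP G i -> minimal_forced_both G M M' [set i] set0.
Proof.
move=> rP.
have F (N : rel 'I_n) : forced G N [set i] set0.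
  split=> a b _; first by rewrite inE => /eqP -> _; rewrite rP.
  by rewrite inE.
split => //; first by rewrite /nonempty_coalition; apply/orP; left; apply/set0Pn; exists i; rewrite inE.
move=> CP CQ; rewrite subset1 subset0 => /orP[/eqP->|/eqP->] /eqP-> //.
by rewrite /nonempty_coalition eqxx.
Qed.

Lemma minQ (R : realType) (n : nat) (G : rifle_game R n) (M M' : rel 'I_n) j :
  rigidQ G j -> minimal_forced_both G M M' set0 [set j].
Proof.
move=> rQ.
have F (N : rel 'I_n) : forced G N set0 [set j].
  split=> a b _; first by rewrite inE.
  by rewrite inE => /eqP -> _; rewrite rQ orbT.
split => //; first by rewrite /nonempty_coalition; apply/orP; right; apply/set0Pn; exists j; rewrite inE.
move=> CP CQ; rewrite subset1 subset0 => /eqP-> /orP[/eqP->|/eqP->] //.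
by rewrite /nonempty_coalition eqxx.
Qed.

Lemma payP (R : realType) (n : nat) (G : rifle_game R n) u v (M : rel 'I_n) i :
  is_matching M -> stable G u v M -> rigidP G i ->
  forced_payoff G M [set i] set0 = u i.
Proof.
move=> HM Hs rP; rewrite /forced_payoff big_set1 big_set0 addr0.
have [_ [Hn _]] := key HM Hs.
case: Hs => [[_ hP _ _] _ _].
case: (pickP (M i)) => [k Mik|none].
  by rewrite (sum_oneP HM _ _ _ Mik); have [-> _] := hP _ _ Mik rP.
by rewrite big_pred0 // Hn // => k; rewrite none.
Qed.

Lemma payQ (R : realType) (n : nat) (G : rifle_game R n) u v (M : rel 'I_n) j :
  is_matching M -> stable G u v M -> rigidQ G j ->
  forced_payoff G M set0 [set j] = v j.
Proof.
move=> HM Hs rQ; rewrite /forced_payoff big_set1 big_set0 add0r.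
have [_ [_ Hn]] := key HM Hs.
case: Hs => [[_ _ hQ _] _ _].
case: (pickP (M^~ j)) => [k Mkj|none].
  by rewrite (sum_oneQ HM _ _ _ Mkj); have [-> _] := hQ _ _ Mkj rQ.
by rewrite big_pred0 // Hn // => k; rewrite none.
Qed.

Arguments payP {R n G u v M i}.
Arguments payQ {R n G u v M j}.

Theorem lemma2 (R : realType) (n : nat) (G : rifle_game R n)
    (u v u' v' : 'I_n -> R) (M M' : rel 'I_n) :
  non_degenerate G ->
  is_matching M -> is_matching M' ->
  stable G u v M -> stable G u' v' M' ->
  forall i j : 'I_n, M i j ->
    (u i = u' i -> v' j < v j -> rigidQ G j) /\
    (v j = v' j -> u' i < u i -> rigidP G i).
Proof.
move=> ND HM HM' Hs Hs' i j Mij.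
have [Hpair _] := key HM Hs.
have e := Hpair _ _ Mij.
have ge0b := beta_ge0 G i j.
move: (Hs) (Hs') => [[_ hP hQ _] _ _] [[_ hP' hQ' _] hF' _].
rewrite /alpha in e hF'.
split=> [eu lt|ev lt].
  case rQ: (rigidQ G j) => //; exfalso.
  case rP: (rigidP G i).
    have [ub _] := hP _ _ Mij rP.
    have co := ND M M' HM HM' _ _ (@minP _ _ G M M' i rP)
      (etrans (payP HM Hs rP) (etrans eu (esym (payP HM' Hs' rP)))).
    have M'ij : M' i j by rewrite -(proj1 co i j (set11 i)).
    have [_ /(_ (negbT rQ)) h] := hP' _ _ M'ij rP.
    move: e ub eu lt h; lra.
  have := hF' i j (negbT rP) (negbT rQ).
  move: e eu lt; lra.
case rP: (rigidP G i) => //; exfalso.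
case rQ: (rigidQ G j).
  have [vb _] := hQ _ _ Mij rQ.
  have co := ND M M' HM HM' _ _ (@minQ _ _ G M M' j rQ)
    (etrans (payQ HM Hs rQ) (etrans ev (esym (payQ HM' Hs' rQ)))).
  have M'ij : M' i j by rewrite -(proj2 co i j (set11 j)).
  have [_ /(_ (negbT rP)) h] := hQ' _ _ M'ij rQ.
  move: e vb ev lt h; lra.
have := hF' i j (negbT rP) (negbT rQ).
move: e ev lt; lra.
Qed.
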